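(* Let $\mathcal{H}$ be a class of functions $\mathcal{X}\to\{-1,+1\}$ with VC dimension $d\ge1$. For $h_1,h_2\in\mathcal{H}$ define $f[h_1,h_2]:\mathcal{X}\times\{-1,+1\}\to\{0,1\}$ by $f[h_1,h_2](x,y)=\mathbb{I}[h_1(x)=y\text{ or }h_2(x)=1]$. Then the VC dimension of $\mathcal{F}=\{f[h_1,h_2]:h_1,h_2\in\mathcal{H}\}$ is at most $10d$. *)

(* Defs.v *)
(* Labels {-1,+1} and {0,1} are both encoded by bool:
   +1 / 1 = true, -1 / 0 = false. *)
From Stdlib Require Import List Bool Arith.
Import ListNotations.

Definition shatters {T : Type} (H : (T -> bool) -> Prop) (S : list T) : Prop :=
  forall lab : T -> bool, exists h, H h /\ forall x, In x S -> h x = lab x.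

Definition VCdim_eq {T : Type} (H : (T -> bool) -> Prop) (d : nat) : Prop :=
  (exists S, NoDup S /\ length S = d /\ shatters H S) /\
  (forall S, NoDup S -> shatters H S -> length S <= d).

Definition VCdim_le {T : Type} (H : (T -> bool) -> Prop) (d : nat) : Prop :=
  forall S, NoDup S -> shatters H S -> length S <= d.

Definition fpair {X : Type} (h1 h2 : X -> bool) (p : X * bool) : bool :=
  Bool.eqb (h1 (fst p)) (snd p) || h2 (fst p).

Definition Fclass {X : Type} (H : (X -> bool) -> Prop) : ((X * bool) -> bool) -> Prop :=
  fun f => exists h1 h2, H h1 /\ H h2 /\ f = fpair h1 h2.

(* Main.v *)
Require Import Defs.
From Stdlib Require Import List Bool Arith ZArith Lia ClassicalEpsilon.
Import ListNotations.

Fixpoint Phi (k n : nat) {struct n} : nat :=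
  match n with
  | 0 => 1
  | S n' => match k with 0 => 1 | S k' => Phi k n' + Phi k' n' end
  end.

Lemma NoDup_map_inj {A B} (f : A -> B) (l : list A) : NoDup l ->
  (forall a b, In a l -> In b l -> f a = f b -> a = b) -> NoDup (map f l).
Proof.
  induction l as [|a l IH]; intros Hn Hi; simpl; constructor.
  - inversion Hn; subst. intros Hin. apply in_map_iff in Hin as [b [Hb Hbin]].
    assert (b = a) by (apply Hi; simpl; auto). subst. contradiction.
  - inversion Hn; subst. apply IH; auto. intros; apply Hi; simpl; auto.
Qed.

Lemma sauer (X : Type) : forall (P : list X), NoDup P ->
  forall (k : nat) (C : (X -> bool) -> Prop),
  (forall T, NoDup T -> incl T P -> shatters C T -> length T <= k) ->
  forall Lp : list (list bool), NoDup Lp ->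
  (forall v, In v Lp -> exists h, C h /\ map h P = v) ->
  length Lp <= Phi k (length P).
Proof.
  induction P as [|x P' IH]; intros HN k C Hk Lp HLp Hreal.
  - simpl. change 1 with (length [@nil bool]). apply NoDup_incl_length; auto.
    intros v Hv. destruct (Hreal v Hv) as [h [_ Hh]]. simpl in Hh. subst. simpl; auto.
  - apply NoDup_cons_iff in HN as [HxP HNP'].
    set (LT := filter (fun v => hd false v) Lp).
    set (LF := filter (fun v => negb (hd false v)) Lp).
    set (LF' := map (@tl bool) LF). set (LT' := map (@tl bool) LT).
    set (mem := fun v => if in_dec (list_eq_dec bool_dec) v LF' then true else false).
    set (LT1 := filter mem LT'). set (LT2 := filter (fun v => negb (mem v)) LT').
    assert (Ha : length Lp = length LT + length LF) by (symmetry; apply filter_length).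
    assert (Hb : length LT' = length LT1 + length LT2) by (symmetry; apply filter_length).
    assert (HLT : length LT' = length LT) by apply length_map.
    assert (HLF : length LF' = length LF) by apply length_map.
    assert (Hshape : forall w, In w Lp -> exists h, C h /\ w = h x :: map h P').
    { intros w Hw. destruct (Hreal w Hw) as [h [Ch Hh]]. exists h; split; [auto| rewrite <- Hh; reflexivity]. }
    assert (HNLT' : NoDup LT').
    { apply NoDup_map_inj. apply NoDup_filter; auto.
      intros a b Ha' Hb' Heq. unfold LT in *. apply filter_In in Ha' as [Ha1 Ha2].
      apply filter_In in Hb' as [Hb1 Hb2].
      destruct (Hshape a Ha1) as [ha [_ ->]]. destruct (Hshape b Hb1) as [hb [_ ->]].
      simpl in *. rewrite Ha2, Hb2, Heq. reflexivity. }
    assert (HNLF' : NoDup LF').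
    { apply NoDup_map_inj. apply NoDup_filter; auto.
      intros a b Ha' Hb' Heq. unfold LF in *. apply filter_In in Ha' as [Ha1 Ha2].
      apply filter_In in Hb' as [Hb1 Hb2].
      destruct (Hshape a Ha1) as [ha [_ ->]]. destruct (Hshape b Hb1) as [hb [_ ->]].
      simpl in *. apply negb_true_iff in Ha2, Hb2. rewrite Ha2, Hb2, Heq. reflexivity. }
    assert (HrT : forall v, In v LT' -> exists h, C h /\ h x = true /\ map h P' = v).
    { intros v Hv. unfold LT', LT in Hv. apply in_map_iff in Hv as [w [Hw Hwin]].
      apply filter_In in Hwin as [Hw1 Hw2]. destruct (Hshape w Hw1) as [h [Ch ->]].
      exists h; simpl in *; auto. }
    assert (HrF : forall v, In v LF' -> exists h, C h /\ h x = false /\ map h P' = v).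
    { intros v Hv. unfold LF', LF in Hv. apply in_map_iff in Hv as [w [Hw Hwin]].
      apply filter_In in Hwin as [Hw1 Hw2]. destruct (Hshape w Hw1) as [h [Ch ->]].
      exists h; simpl in *. apply negb_true_iff in Hw2. auto. }
    assert (H1 : length (LF' ++ LT2) <= Phi k (length P')).
    { apply (IH HNP' k C).
      - intros T HT HTi HTs. apply Hk; auto. intros y Hy; right; auto.
      - apply NoDup_app; auto. apply NoDup_filter; auto.
        intros a Ha' Hb'. unfold LT2 in Hb'. apply filter_In in Hb' as [_ Hm].
        unfold mem in Hm. destruct (in_dec _ a LF'); simpl in Hm; congruence.
      - intros v Hv. apply in_app_or in Hv as [Hv|Hv].
        + destruct (HrF v Hv) as [h [? [_ ?]]]; eauto.
        + unfold LT2 in Hv. apply filter_In in Hv as [Hv _].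
          destruct (HrT v Hv) as [h [? [_ ?]]]; eauto. }
    assert (Hpair : forall v, In v LT1 -> exists h h', C h /\ C h' /\ h x = true /\
                      h' x = false /\ map h P' = v /\ map h' P' = v).
    { intros v Hv. unfold LT1 in Hv. apply filter_In in Hv as [Hv Hm].
      unfold mem in Hm. destruct (in_dec _ v LF') as [Hin|]; [|discriminate].
      destruct (HrT v Hv) as [h [? [? ?]]]. destruct (HrF v Hin) as [h' [? [? ?]]].
      exists h, h'; repeat split; auto. }
    rewrite length_app in H1.
    destruct k as [|k'].
    + assert (Hp0 : forall n, Phi 0 n = 1) by (intros [|n]; reflexivity).
      rewrite Hp0 in H1. simpl. clearbody LT1. destruct LT1 as [|v LT1'].
      * simpl in *. lia.
      * exfalso. destruct (Hpair v (or_introl eq_refl)) as [h [h' [Ch [Ch' [Hx [Hx' _]]]]]].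
        assert (length [x] <= 0); [|simpl in *; lia].
        apply Hk. constructor; [simpl; tauto|constructor].
        intros y [<-|[]]; left; auto.
        intros lab. destruct (lab x) eqn:El.
        -- exists h; split; auto. intros y [<-|[]]; congruence.
        -- exists h'; split; auto. intros y [<-|[]]; congruence.
    + assert (H2 : length LT1 <= Phi k' (length P')).
      { apply (IH HNP' k' (fun h => C h /\ exists h', C h' /\ map h' P' = map h P' /\ h' x <> h x)).
        - intros T HT HTi HTs.
          assert (length (x :: T) <= S k'); [|simpl in *; lia].
          apply Hk.
          + constructor; auto.
          + intros y [<-|Hy]; [left; auto|right; auto].
          + intros lab. destruct (HTs lab) as [h [[Ch [h' [Ch' [Hm Hd]]]] Hag]].
            destruct (Bool.bool_dec (h x) (lab x)) as [Hhx|Hhx].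
            * exists h; split; auto. intros y [<-|Hy]; auto.
            * exists h'; split; auto. intros y [<-|Hy].
              -- destruct (h' x), (h x), (lab x); congruence.
              -- rewrite <- Hag by auto. apply (ext_in_map Hm). apply HTi; auto.
        - apply NoDup_filter; auto.
        - intros v Hv. destruct (Hpair v Hv) as [h [h' [Ch [Ch' [Hx [Hx' [Hm Hm']]]]]]].
          exists h. split; [split; auto; exists h'; split; [auto|split]; congruence|auto]. }
      simpl. lia.
Qed.

Fixpoint allb (n : nat) : list (list bool) :=
  match n with
  | 0 => [[]]
  | S n' => map (cons true) (allb n') ++ map (cons false) (allb n')
  end.

Lemma allb_length n : length (allb n) = 2 ^ n.
Proof. induction n; simpl; auto. rewrite length_app, !length_map. lia. Qed.

Lemma allb_in v : In v (allb (length v)).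
Proof.
  induction v as [|b v IH]; simpl; auto. apply in_or_app.
  destruct b; [left|right]; apply in_map; auto.
Qed.

Lemma allb_nodup n : NoDup (allb n).
Proof.
  induction n; simpl. constructor; auto. constructor.
  apply NoDup_app.
  - apply NoDup_map_inj; auto. intros a b _ _ H; injection H; auto.
  - apply NoDup_map_inj; auto. intros a b _ _ H; injection H; auto.
  - intros a Ha Hb. apply in_map_iff in Ha as [? [<- _]].
    apply in_map_iff in Hb as [? [H _]]. discriminate.
Qed.

Lemma Phi_bound : forall n k, Phi k n * 10 ^ n <= 10 ^ k * 11 ^ n.
Proof.
  induction n as [|n IH]; intros k.
  - simpl. pose proof (Nat.pow_le_mono_r 10 0 k). simpl in H. lia.
  - destruct k as [|k].
    + simpl. pose proof (Nat.pow_le_mono_l 10 11 n). lia.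
    + simpl Phi. rewrite !Nat.pow_succ_r'.
      pose proof (IH (S k)). pose proof (IH k). rewrite Nat.pow_succ_r' in *. nia.
Qed.

Fixpoint comb (ys a b : list bool) : list bool :=
  match ys, a, b with
  | y :: ys', a0 :: a', b0 :: b' => (Bool.eqb a0 y || b0) :: comb ys' a' b'
  | _, _, _ => []
  end.

Lemma comb_map {X} (h1 h2 : X -> bool) (S : list (X * bool)) :
  map (fpair h1 h2) S = comb (map snd S) (map h1 (map fst S)) (map h2 (map fst S)).
Proof. induction S as [|[x y] S IH]; simpl; auto. rewrite IH. reflexivity. Qed.

Lemma fst_nodup {X} (h1 h2 : X -> bool) : forall S : list (X * bool), NoDup S ->
  (forall p, In p S -> fpair h1 h2 p = false) -> NoDup (map fst S).
Proof.
  induction S as [|p S IH]; intros Hn Hf; simpl; constructor.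
  - apply NoDup_cons_iff in Hn as [Hp _]. intros Hin.
    apply in_map_iff in Hin as [q [Hq Hqin]].
    assert (Hfp := Hf p (or_introl eq_refl)). assert (Hfq := Hf q (or_intror Hqin)).
    destruct p as [x y], q as [x' y']. simpl in *. subst x'. unfold fpair in *. simpl in *.
    apply orb_false_iff in Hfp as [Hp1 _]. apply orb_false_iff in Hfq as [Hq1 _].
    apply Hp. replace y with y'; auto.
    destruct (h1 x), y, y'; simpl in *; congruence.
  - apply IH. inversion Hn; auto. intros; apply Hf; right; auto.
Qed.

Lemma lab_exists {A} : forall S : list A, NoDup S -> forall v : list bool, length v = length S ->
  exists lab : A -> bool, map lab S = v.
Proof.
  induction S as [|p S IH]; intros HN v Hv.
  - destruct v; [|discriminate]. exists (fun _ => true); auto.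
  - destruct v as [|b v]; [discriminate|]. simpl in Hv.
    apply NoDup_cons_iff in HN as [Hp HN].
    destruct (IH HN v) as [lab Hl]; [lia|].
    exists (fun q => if excluded_middle_informative (q = p) then b else lab q).
    simpl. destruct (excluded_middle_informative (p = p)); [|congruence]. f_equal.
    rewrite <- Hl. apply map_ext_in. intros q Hq.
    destruct (excluded_middle_informative (q = p)); auto. subst. contradiction.
Qed.

Lemma allb_len n v : In v (allb n) -> length v = n.
Proof.
  revert v; induction n; simpl; intros v Hv.
  - destruct Hv as [<-|[]]; auto.
  - apply in_app_or in Hv as [Hv|Hv]; apply in_map_iff in Hv as [w [<- Hw]]; simpl; auto.
Qed.

Lemma arithZ (d j : nat) :
  (100 ^ Z.of_nat d * 121 ^ (10 * Z.of_nat d + 1 + Z.of_nat j) <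
   200 ^ (10 * Z.of_nat d + 1 + Z.of_nat j))%Z.
Proof.
  set (D := Z.of_nat d). set (J := Z.of_nat j).
  assert (0 <= D)%Z by lia. assert (0 <= J)%Z by lia.
  rewrite !Z.pow_add_r, !Z.pow_mul_r by lia.
  assert (H1 : (100 ^ D * (121 ^ 10) ^ D <= (200 ^ 10) ^ D)%Z).
  { rewrite <- Z.pow_mul_l. apply Z.pow_le_mono_l. split; [lia|].
    apply Z.leb_le. reflexivity. }
  assert (H2 : (121 ^ 1 * 121 ^ J < 200 ^ 1 * 200 ^ J)%Z).
  { rewrite <- !Z.pow_add_r by lia. apply Z.pow_lt_mono_l; lia. }
  assert (0 < 121 ^ J)%Z by (apply Z.pow_pos_nonneg; lia).
  assert (0 < 100 ^ D)%Z by (apply Z.pow_pos_nonneg; lia).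
  assert (0 < (121^10) ^ D)%Z by (apply Z.pow_pos_nonneg; lia).
  nia.
Qed.

Lemma arith (d m : nat) : 10 * d < m ->
  2 ^ m * (10 ^ m * 10 ^ m) <= (10 ^ d * 11 ^ m) * (10 ^ d * 11 ^ m) -> False.
Proof.
  intros Hm Hle. destruct (Nat.le_exists_sub (10 * d + 1) m) as [j [Hj _]]; [lia|].
  assert (E1 : 2 ^ m * (10 ^ m * 10 ^ m) = 200 ^ m).
  { rewrite <- !Nat.pow_mul_l. reflexivity. }
  assert (E2 : (10 ^ d * 11 ^ m) * (10 ^ d * 11 ^ m) = 100 ^ d * 121 ^ m).
  { assert (A1 : 100 ^ d = 10 ^ d * 10 ^ d) by (rewrite <- Nat.pow_mul_l; reflexivity).
    assert (A2 : 121 ^ m = 11 ^ m * 11 ^ m) by (rewrite <- Nat.pow_mul_l; reflexivity).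
    rewrite A1, A2. ring. }
  rewrite E1, E2 in Hle. apply Nat2Z.inj_le in Hle.
  rewrite Nat2Z.inj_mul, !Nat2Z.inj_pow in Hle.
  pose proof (arithZ d j).
  replace (Z.of_nat m) with (10 * Z.of_nat d + 1 + Z.of_nat j)%Z in Hle by lia.
  simpl Z.of_nat in Hle. lia.
Qed.

Theorem lemma6 (X : Type) (H : (X -> bool) -> Prop) (d : nat) :
  1 <= d -> VCdim_eq H d -> VCdim_le (Fclass H) (10 * d).
Proof.
  intros _ [_ Hvc] S HnS Hsh.
  destruct (Hsh (fun _ => false)) as [f0 [[g1 [g2 [_ [_ ->]]]] Hf0]].
  assert (HP0 : NoDup (map fst S)) by (apply (fst_nodup g1 g2); auto).
  set (P := map fst S) in *. set (m := length S).
  assert (HPm : length P = m) by apply length_map.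
  set (HP := filter (fun a => if excluded_middle_informative (exists h, H h /\ map h P = a)
                              then true else false) (allb m)).
  assert (HPlen : length HP <= Phi d m).
  { rewrite <- HPm. apply (sauer X P HP0 d H).
    - intros T HT _ HTs. apply Hvc; auto.
    - apply NoDup_filter, allb_nodup.
    - intros v Hv. apply filter_In in Hv as [_ Hv].
      destruct (excluded_middle_informative _); [auto|discriminate]. }
  assert (Hin : forall h, H h -> In (map h P) HP).
  { intros h Hh. apply filter_In. split.
    - rewrite <- HPm, <- (length_map h P). apply allb_in.
    - destruct (excluded_middle_informative _) as [|n]; auto. exfalso; apply n; eauto. }
  set (g := fun pr : list bool * list bool => comb (map snd S) (fst pr) (snd pr)).
  assert (Hall : 2 ^ m <= length HP * length HP).
  { rewrite <- allb_length, <- length_prod, <- (length_map g).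
    apply NoDup_incl_length; [apply allb_nodup|]. intros v Hv.
    apply allb_len in Hv. destruct (lab_exists S HnS v) as [lab Hl]; [auto|].
    destruct (Hsh lab) as [f [[h1 [h2 [Hh1 [Hh2 ->]]]] Hag]].
    apply in_map_iff. exists (map h1 P, map h2 P). split.
    - unfold g; simpl. unfold P. rewrite <- comb_map, <- Hl. apply map_ext_in. auto.
    - apply in_prod; auto. }
  pose proof (Phi_bound m d).
  destruct (Nat.le_gt_cases m (10 * d)) as [|Hlt]; [auto|exfalso].
  apply (arith d m Hlt).
  assert (2 ^ m <= Phi d m * Phi d m) by nia.
  nia.
Qed.
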